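(* For every integer $n\geq 1$, $$A_{2n}(p,q)=(1+p)A_{2n-1}(p,q)+(p+q)\sum_{i=1}^{n-1}\binom{2n-1}{2i-1}A_{2i-1}(p,q)A_{2n-2i}(p,q),$$ $$A_{2n+1}(p,q)=A_{2n}(p,q)+p\sum_{i=0}^{n-1}\binom{2n}{2i}A_{2i}(p,q)A_{2n-2i}(q,p)+q\sum_{i=1}^{n}\binom{2n}{2i-1}A_{2i-1}(p,q)A_{2n-2i+1}(p,q).$$
   Context: For a permutation $\pi=a_1a_2\cdots a_n$ of $[n]=\{1,\dots,n\}$, an index $i\in[n-1]$ is a descent if $a_i>a_{i+1}$. Let $\mathrm{odes}(\pi)$ (resp. $\mathrm{edes}(\pi)$) be the number of descents $i$ of $\pi$ with $i$ odd (resp. even). For $n\ge1$ the refined Eulerian polynomial is $A_n(p,q)=\sum_{\pi\in\mathfrak S_n}p^{\mathrm{odes}(\pi)}q^{\mathrm{edes}(\pi)}$, and $A_0(p,q)=1$. *)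

(* Defs.v *)
From HB Require Import structures.
From mathcomp Require Import all_boot all_order all_algebra all_fingroup.
Set Implicit Arguments. Unset Strict Implicit. Unset Printing Implicit Defensive.
Import GRing.Theory.

(* The one-line notation a_1 a_2 ... a_n of s : 'S_n, with values shifted to
   0..n-1 (a_{j+1} = val (s j)); shifting does not affect descents. *)
Definition perm_word (n : nat) (s : 'S_n) : seq nat := [seq val (s i) | i <- enum 'I_n].

(* Number of descents i in [n-1] (1-based) with odd i (resp. even i).
   The 1-based index i corresponds to the 0-based position j = i - 1. *)
Definition odes (n : nat) (s : 'S_n) : nat :=
  let a := perm_word s in
  \sum_(1 <= i < n) ((nth 0 a i.-1 > nth 0 a i) && odd i).
Definition edes (n : nat) (s : 'S_n) : nat :=
  let a := perm_word s in
  \sum_(1 <= i < n) ((nth 0 a i.-1 > nth 0 a i) && ~~ odd i).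

(* Refined Eulerian polynomial A_n(p,q), evaluated at p, q in an arbitrary
   commutative ring (identity for all such evaluations = polynomial identity). *)
Definition A (R : comPzRingType) (n : nat) (p q : R) : R :=
  \sum_(s : 'S_n) p ^+ odes s * q ^+ edes s.

(* Main.v *)
Require Import Defs.
From HB Require Import structures.
From mathcomp Require Import all_boot all_order all_algebra all_fingroup.
From mathcomp Require Import zify ring.
Import GRing.Theory.
Local Open Scope ring_scope.
Set Implicit Arguments. Unset Strict Implicit. Unset Printing Implicit Defensive.

Section W.
Variable R : comPzRingType.

Fixpoint W (p q : R) (s : seq nat) : R :=
  match s with
  | a :: ((c :: _) as t) => (if (c < a)%N then p else 1) * W q p t
  | _ => 1
  end.

Definition Do (a : seq nat) : nat :=
  \sum_(1 <= i < size a) ((nth 0 a i.-1 > nth 0 a i) && odd i).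
Definition De (a : seq nat) : nat :=
  \sum_(1 <= i < size a) ((nth 0 a i.-1 > nth 0 a i) && ~~ odd i).

Lemma shift_sum (x : nat) t (b : bool) :
  (\sum_(1 <= i < size (x :: t)) ((nth 0 (x :: t) i.-1 > nth 0 (x :: t) i) && (odd i == b)))%N =
  (((0 < size t) && (nth 0 t 0 < x) && b) +
   \sum_(1 <= i < size t) ((nth 0 t i.-1 > nth 0 t i) && (odd i == ~~ b)))%N.
Proof.
case: t => [|c t] /=.
  by rewrite !big_geq.
rewrite big_ltn // /=; congr addn.
rewrite big_add1 /=.
rewrite [in RHS]big_nat_cond [in LHS]big_nat_cond.
apply: eq_bigr => i /andP [/andP [Hi _] _].
case: i Hi => [|i] Hi //=.
by case: b; case: (odd i).
Qed.

Lemma W_pow (a : seq nat) (p q : R) : W p q a = p ^+ Do a * q ^+ De a.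
Proof.
elim: a p q => [|x t IH] p q; first by rewrite /Do /De !big_geq // !expr0 mulr1.
have Eo : Do (x :: t) = (((0 < size t) && (nth 0 t 0 < x)) + De t)%N.
  rewrite /Do /De.
  have := shift_sum x t true.
  rewrite andbT.
  under eq_bigr do rewrite eqb_id.
  move=> ->; congr (_ + _)%N; apply: eq_bigr => i _; by case: (odd i).
have Ee : De (x :: t) = Do t.
  rewrite /Do /De.
  have := shift_sum x t false.
  rewrite andbF add0n.
  under eq_bigr do rewrite eqbF_neg.
  move=> ->; apply: eq_bigr => i _; by case: (odd i).
rewrite Eo Ee.
case: t IH Eo Ee => [|c t] IH Eo Ee.
  by rewrite /Do /De !big_geq //= !expr0 mulr1.
have -> : W p q [:: x, c & t] = (if (c < x)%N then p else 1) * W q p (c :: t) by [].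
rewrite IH exprD /=.
case: (c < x)%N; rewrite ?expr1 ?expr0 ?mul1r; ring.
Qed.


Definition Pm (m : nat) := permutations (iota 0 m).
Definition A' (m : nat) (p q : R) : R := \sum_(t <- Pm m) W p q t.

Lemma size_pw m (s : 'S_m) : size (perm_word s) = m.
Proof. by rewrite size_map size_enum_ord. Qed.

Lemma nth_pw m (s : 'S_m) (i : 'I_m) : nth 0 (perm_word s) i = s i.
Proof. by rewrite /perm_word (nth_map i) ?size_enum_ord // nth_ord_enum. Qed.

Lemma pw_inj m : injective (@perm_word m).
Proof.
move=> s1 s2 E; apply/permP => i; apply/val_inj; by rewrite /= -(nth_pw s1) -(nth_pw s2) E.
Qed.

Lemma pw_perm m (s : 'S_m) : perm_eq (perm_word s) (iota 0 m).
Proof.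
rewrite -val_enum_ord /perm_word (map_comp val s).
apply: perm_map; apply: uniq_perm.
- by rewrite map_inj_uniq ?enum_uniq //; apply: perm_inj.
- exact: enum_uniq.
move=> x; rewrite mem_enum; apply/mapP; exists (s^-1 x)%g; first by rewrite mem_enum.
by rewrite permKV.
Qed.

Lemma pw_surj m u : perm_eq u (iota 0 m) -> exists s : 'S_m, perm_word s = u.
Proof.
move=> Hu.
have Hs : size u = m by rewrite (perm_size Hu) size_iota.
have Hlt : forall i, (i < m)%N -> (nth 0 u i < m)%N.
  move=> i Hi; have : nth 0 u i \in u by rewrite mem_nth // Hs.
  by rewrite (perm_mem Hu) mem_iota.
have Uu : uniq u by rewrite (perm_uniq Hu) iota_uniq.
pose f (i : 'I_m) : 'I_m := insubd i (nth 0 u i).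
have fE : forall i, val (f i) = nth 0 u i.
  by move=> i; rewrite /f val_insubd Hlt.
have finj : injective f.
  move=> i j /(congr1 val); rewrite !fE => /eqP.
  rewrite nth_uniq ?Hs // => /eqP; exact: val_inj.
exists (perm finj).
apply: (@eq_from_nth _ 0); first by rewrite size_pw Hs.
move=> i; rewrite size_pw => Hi.
by rewrite (nth_pw _ (Ordinal Hi)) permE fE.
Qed.

Lemma AE m p q : A m p q = A' m p q.
Proof.
rewrite /A /A'.
have -> : \sum_(s : 'S_m) p ^+ odes s * q ^+ edes s = \sum_(s : 'S_m) W p q (perm_word s).
  apply: eq_bigr => s _; rewrite W_pow /Do /De /odes /edes /= size_pw //.
rewrite -big_image /=.
apply: perm_big; apply: uniq_perm.
- rewrite map_inj_uniq ?enum_uniq //; exact: pw_inj.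
- exact: permutations_uniq.
move=> u; rewrite mem_permutations; apply/mapP/idP.
  by case=> s _ ->; apply: pw_perm.
by move=> /pw_surj [s Es]; exists s; rewrite ?mem_enum.
Qed.


Lemma W_cons p q a c t : W p q [:: a, c & t] = (if (c < a)%N then p else 1) * W q p (c :: t).
Proof. by []. Qed.

Lemma W_map (f : nat -> nat) p q u :
  {in u &, forall a c, (f c < f a)%N = (c < a)%N} -> W p q (map f u) = W p q u.
Proof.
elim: u p q => [|a t IH] p q H; first by [].
case: t IH H => [|c t] IH H; first by [].
rewrite !map_cons W_cons -map_cons IH ?W_cons; last by move=> x y Hx Hy; apply: H; rewrite inE ?Hx ?Hy orbT.
by rewrite H // !inE eqxx ?orbT.
Qed.

Lemma Pm_lt m u x : u \in Pm m -> x \in u -> (x < m)%N.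
Proof. by rewrite /Pm mem_permutations => /perm_mem ->; rewrite mem_iota. Qed.

Lemma std s p q : sorted ltn s -> \sum_(t <- permutations s) W p q t = A' (size s) p q.
Proof.
move=> Ss.
have Us : uniq s by move: Ss; rewrite ltn_sorted_uniq_leq => /andP [].
set m := size s; set f := nth 0 s.
have fmono : forall a c, (a < m)%N -> (c < m)%N -> (f c < f a)%N = (c < a)%N.
  move=> a c Ha Hc; case: (ltngtP c a) => H.
  - by apply: (sorted_ltn_nth ltn_trans 0 Ss).
  - apply/negbTE; rewrite -leqNgt; apply: ltnW.
    by apply: (sorted_ltn_nth ltn_trans 0 Ss).
  - by rewrite H ltnn.
have idx : forall i, (i < m)%N -> index (f i) s = i by move=> i Hi; rewrite index_uniq.
have Es : map f (iota 0 m) = s by rewrite -/(mkseq f m) mkseq_nth.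
have PE : perm_eq (map (map f) (Pm m)) (permutations s).
  apply: uniq_perm.
  - rewrite map_inj_in_uniq ?permutations_uniq //.
    move=> u1 u2 H1 H2 E.
    have K : forall u, u \in Pm m -> map (index^~ s) (map f u) = u.
      move=> u Hu; rewrite -map_comp -[RHS]map_id; apply/eq_in_map => x Hx /=.
      by rewrite idx // (Pm_lt Hu).
    by rewrite -(K u1 H1) -(K u2 H2) E.
  - exact: permutations_uniq.
  move=> u'; rewrite mem_permutations; apply/mapP/idP.
    case=> u Hu ->; rewrite -Es; apply: perm_map; by move: Hu; rewrite mem_permutations.
  move=> Hu'; exists (map (index^~ s) u').
    have Ei : map (index^~ s) s = iota 0 m.
      transitivity (map (index^~ s) (map f (iota 0 m))); first by rewrite Es.
      rewrite -map_comp -[RHS]map_id; apply/eq_in_map => x.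
      by rewrite mem_iota add0n => Hx /=; rewrite idx.
    by rewrite mem_permutations -Ei; apply: perm_map.
  rewrite -map_comp -[LHS]map_id; apply/eq_in_map => x Hx /=.
  by rewrite /f nth_index // -(perm_mem Hu').
rewrite /A' -(perm_big _ PE) big_map; apply: eq_big_seq => u Hu.
apply: W_map => a c Ha Hc; apply: fmono; exact: (Pm_lt Hu).
Qed.


Lemma W_cat p q l x r : all (fun y => (y < x)%N) l ->
  W p q (l ++ x :: r) = W p q l * (if odd (size l) then W q p (x :: r) else W p q (x :: r)).
Proof.
elim: l p q => [|a l IH] p q; first by rewrite cat0s [W p q [::]]/= mul1r.
case/andP => Ha Hl.
case: l IH Hl => [|c l] IH Hl.
  by rewrite cat1s W_cons ltnNge (ltnW Ha) mul1r.
rewrite -[[:: a, c & l] ++ _]/(a :: (c :: l ++ x :: r)) W_cons -cat_cons IH // W_cons mulrA.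
rewrite [size _]/= [odd _.+2]/=.
by rewrite /=; case: (odd (size l)).
Qed.

Lemma W_max p q x r : all (fun y => (y < x)%N) r ->
  W p q (x :: r) = if r is [::] then 1 else p * W q p r.
Proof. by case: r => // c r /andP [H _]; rewrite W_cons H. Qed.

Definition L N (S : {set 'I_N}) : seq nat := [seq val i | i <- enum S].

Lemma memLo N (S : {set 'I_N}) (i : 'I_N) : (val i \in L S) = (i \in S).
Proof. by rewrite /L mem_map ?mem_enum //; exact: val_inj. Qed.

Lemma memL_lt N (S : {set 'I_N}) v : v \in L S -> (v < N)%N.
Proof. by case/mapP => i _ ->; apply: ltn_ord. Qed.

Lemma uniqL N (S : {set 'I_N}) : uniq (L S).
Proof. by rewrite /L map_inj_uniq ?enum_uniq //; exact: val_inj. Qed.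

Lemma sizeL N (S : {set 'I_N}) : size (L S) = #|S|.
Proof. by rewrite /L size_map cardE. Qed.

Lemma sortedL N (S : {set 'I_N}) : sorted ltn (L S).
Proof.
have E : enum S = filter (mem S) (enum 'I_N) by rewrite enumT.
apply: (@subseq_sorted _ _ ltn_trans _ (iota 0 N)).
  by rewrite -val_enum_ord /L E; apply: map_subseq; apply: filter_subseq.
by rewrite ltn_sorted_uniq_leq iota_uniq iota_sorted.
Qed.

Lemma LC N (S : {set 'I_N}) : perm_eq (L S ++ L (~: S)) (iota 0 N).
Proof.
rewrite /L -map_cat -val_enum_ord; apply: perm_map; apply: uniq_perm.
- rewrite cat_uniq !enum_uniq /= andbT; apply/hasPn => x.
  by rewrite !mem_enum in_setC => ->.
- exact: enum_uniq.
by move=> x; rewrite mem_cat !mem_enum in_setC orbN.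
Qed.

Lemma memL_ord N (S : {set 'I_N}) v (Hv : (v < N)%N) : (v \in L S) = (Ordinal Hv \in S).
Proof. by rewrite -memLo. Qed.

Lemma decomp N p q : A' N.+1 p q =
  \sum_(S : {set 'I_N}) \sum_(l <- permutations (L S)) \sum_(r <- permutations (L (~: S)))
     W p q (l ++ N :: r).
Proof.
rewrite /A' /Pm.
pose St (t : seq nat) : {set 'I_N} := [set i : 'I_N | val i \in take (index N t) t].
rewrite (partition_big St predT) //=.
apply: eq_bigr => S _.
rewrite -big_filter.
rewrite -(big_allpairs_dep (h := fun (l : seq nat) (r : seq nat) => l ++ N :: r) (F := W p q)).
have iotaS : iota 0 N.+1 = rcons (iota 0 N) N by rewrite -addn1 iotaD cats1.
have StE : forall l r, N \notin l -> St (l ++ N :: r) = [set i : 'I_N | val i \in l].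
  move=> l r Hl; apply/setP => i; rewrite !inE index_cat (negbTE Hl) /= eqxx addn0.
  by rewrite take_size_cat.
apply: perm_big; apply: uniq_perm.
- by rewrite filter_uniq // permutations_uniq.
- apply: allpairs_uniq; try exact: permutations_uniq.
  move=> [l1 r1] [l2 r2] /allpairsP [[l1' r1'] /= [H1 _ [-> ->]]].
  move=> /allpairsP [[l2' r2'] /= [H2 _ [-> ->]]] /= /eqP.
  rewrite eqseq_cat; last first.
    by move: H1 H2; rewrite !mem_permutations => /perm_size -> /perm_size ->.
  by case/andP => /eqP -> /eqP [->].
move=> t; rewrite mem_filter mem_permutations; apply/andP/idP.
  case=> /eqP HS Ht; have {}Ht : perm_eq t (iota 0 N.+1) := Ht.
  have Ut : uniq t by rewrite (perm_uniq Ht) iota_uniq.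
  have HN : N \in t by rewrite (perm_mem Ht) mem_iota add0n ltnSn.
  have Hlt : forall v, v \in t -> (v <= N)%N by move=> v; rewrite (perm_mem Ht) mem_iota ltnS.
  move: HS Ut Hlt Ht; case/splitPr: HN => l r HS Ut Hlt Ht.
  have Nl : N \notin l.
    by move: Ut; rewrite cat_uniq => /and3P [_ /hasPn /(_ N) H _]; apply: H; rewrite inE eqxx.
  have Nr : N \notin r by move: Ut; rewrite cat_uniq /= => /and4P [_ _ ->].
  have lr : forall v, v \in l -> v \notin r.
    move=> v Hv; move: Ut; rewrite cat_uniq => /and3P [_ /hasPn H _].
    by apply/negP => Hr; move: (H v); rewrite inE Hr orbT => /(_ isT); rewrite Hv.
  rewrite StE // in HS.
  apply/allpairsP; exists (l, r) => /=; split => //; rewrite mem_permutations.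
  + apply: uniq_perm; first by move: Ut; rewrite cat_uniq => /andP [].
      exact: uniqL.
    move=> v; case: (ltnP v N) => Hv.
      by rewrite memL_ord -HS inE.
    apply/idP/idP => H.
      have : (v <= N)%N by apply: Hlt; rewrite mem_cat H.
      rewrite leq_eqVlt ltnNge Hv orbF => /eqP E; by rewrite -E H in Nl.
    by move: (memL_lt H); rewrite ltnNge Hv.
  + apply: uniq_perm; first by move: Ut; rewrite cat_uniq /= => /and4P [_ _ _ ->].
      exact: uniqL.
    move=> v; case: (ltnP v N) => Hv.
      rewrite memL_ord -HS !inE /=.
      apply/idP/idP => H.
        by apply/negP => Hl; move: (lr v Hl); rewrite H.
      have : v \in l ++ N :: r by rewrite (perm_mem Ht) mem_iota add0n ltnS leq0n ltnW.
      rewrite mem_cat (negbTE H) /= inE => /orP [/eqP E|//].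
      by rewrite E ltnn in Hv.
    apply/idP/idP => H.
      have : (v <= N)%N by apply: Hlt; rewrite mem_cat inE H !orbT.
      rewrite leq_eqVlt ltnNge Hv orbF => /eqP E; by rewrite -E H in Nr.
    by move: (memL_lt H); rewrite ltnNge Hv.
case/allpairsP => [[l r] /= [Hl Hr ->]].
move: Hl Hr; rewrite !mem_permutations => Hl Hr.
have Nl : N \notin l by rewrite (perm_mem Hl); apply/negP => /memL_lt; rewrite ltnn.
split.
  apply/eqP; rewrite StE //; apply/setP => i; rewrite inE (perm_mem Hl) memLo //.
change (perm_eq (l ++ N :: r) (iota 0 N.+1)).
apply: (@perm_trans _ (N :: (l ++ r))).
  by rewrite -[N :: r]cat1s perm_catCA.
rewrite iotaS -cats1 perm_sym perm_catC /= perm_cons perm_sym.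
apply: perm_trans (LC S); exact: perm_cat.
Qed.


Lemma A'0 p q : A' 0 p q = 1.
Proof. by rewrite /A' /Pm /= big_seq1. Qed.

Lemma sum_card N (F : nat -> R) :
  \sum_(S : {set 'I_N}) F #|S| = \sum_(k < N.+1) 'C(N, k)%:R * F k.
Proof.
rewrite (partition_big (fun S : {set 'I_N} => inord #|S| : 'I_N.+1) predT) //=.
apply: eq_bigr => k _.
have cS : forall S : {set 'I_N}, (#|S| < N.+1)%N.
  by move=> S; rewrite ltnS; apply: leq_trans (max_card _) _; rewrite card_ord.
rewrite (eq_bigr (fun _ => F k)); last first.
  by move=> S /eqP <-; rewrite inordK.
rewrite sumr_const mulr_natl; congr (_ *+ _).
have := @card_draws ('I_N) k; rewrite card_ord => <-; apply: eq_card => S; rewrite !inE.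
rewrite unfold_in /= inordK //.

Qed.


Lemma rec N p q : A' N.+1 p q = \sum_(k < N.+1) 'C(N, k)%:R *
  (A' k p q * (if (k == N :> nat) then 1 else if odd k then q * A' (N - k) p q else p * A' (N - k) q p)).
Proof.
rewrite decomp -(@sum_card N (fun k => A' k p q *
  (if k == N then 1 else if odd k then q * A' (N - k) p q else p * A' (N - k) q p))).
apply: eq_bigr => S _.
have szC : size (L (~: S)) = (N - #|S|)%N.
  by rewrite sizeL cardsCs setCK card_ord.
have cS : (#|S| <= N)%N by apply: leq_trans (max_card _) _; rewrite card_ord.
pose g (b : bool) (r : seq nat) := if r is [::] then 1 else (if b then q * W p q r else p * W q p r).
transitivity (\sum_(l <- permutations (L S)) W p q l * \sum_(r <- permutations (L (~: S))) g (odd #|S|) r).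
  apply: eq_big_seq => l; rewrite mem_permutations => Hl.
  rewrite big_distrr /=; apply: eq_big_seq => r; rewrite mem_permutations => Hr.
  rewrite W_cat; last by apply/allP => v; rewrite (perm_mem Hl) => /memL_lt.
  rewrite (perm_size Hl) sizeL !W_max; last 2 first.
  - by apply/allP => v; rewrite (perm_mem Hr) => /memL_lt.
  - by apply/allP => v; rewrite (perm_mem Hr) => /memL_lt.
  by rewrite /g; case: (odd #|S|).
rewrite -big_distrl /= std ?sortedL // sizeL; congr (_ * _).
case: eqP => HN.
  have E : forall r, r \in permutations (L (~: S)) -> r = [::].
    by move=> r; rewrite mem_permutations => /perm_size; rewrite szC HN subnn => /size0nil.
  rewrite (eq_big_seq (fun r => W p q r)); last by move=> r /E ->.
  by rewrite std ?sortedL // szC HN subnn A'0.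
have NE : forall r, r \in permutations (L (~: S)) -> r != [::].
  move=> r; rewrite mem_permutations => /perm_size; rewrite szC.
  by case: r => //= E; move: cS; rewrite leq_eqVlt (negbTE (introN eqP HN)) /= -subn_gt0 -E.
case: (odd #|S|).
  rewrite (eq_big_seq (fun r => q * W p q r)); last by move=> r /NE; rewrite /g; case: r.
  by rewrite -big_distrr /= std ?sortedL // szC.
rewrite (eq_big_seq (fun r => p * W q p r)); last by move=> r /NE; rewrite /g; case: r.
by rewrite -big_distrr /= std ?sortedL // szC.
Qed.


Lemma perm_inv (T : eqType) (P : seq T) (f : T -> T) : uniq P ->
  {in P, forall t, f t \in P} -> {in P, involutive f} -> perm_eq (map f P) P.
Proof.
move=> UP fP fK; apply: uniq_perm => //.
  rewrite map_inj_in_uniq // => a b Ha Hb E.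
  by rewrite -(fK a Ha) E fK.
move=> u; apply/mapP/idP => [[t Ht ->]|Hu]; first exact: fP.
by exists (f u); rewrite ?fP ?fK.
Qed.

Definition rc (m : nat) (t : seq nat) := map (fun v => (m.-1 - v)%N) (rev t).

Lemma D_rc m t b : size t = m -> odd m -> all (fun v => v < m)%N t ->
  (\sum_(1 <= i < m) ((nth 0 (rc m t) i.-1 > nth 0 (rc m t) i) && (odd i == b)) =
   \sum_(1 <= i < m) ((nth 0 t i.-1 > nth 0 t i) && (odd i == ~~ b)))%N.
Proof.
move=> Hs Hm /allP Ht.
have nthrc : forall i, (i < m)%N -> nth 0 (rc m t) i = (m.-1 - nth 0 t (m - i.+1))%N.
  move=> i Hi; rewrite /rc (nth_map 0) ?size_rev ?Hs // nth_rev ?Hs //.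
have lt : forall i, (i < m)%N -> (nth 0 t i < m)%N.
  by move=> i Hi; apply: Ht; rewrite mem_nth ?Hs.
rewrite big_nat_rev /= [RHS]big_nat_cond [LHS]big_nat_cond.
apply: eq_bigr => i /andP [/andP [H1 H2] _].
rewrite add1n subSS.
have Hi1 : (m - i < m)%N by lia.
rewrite !nthrc //; last by lia.
have -> : ((m - i).-1.+1 = m - i)%N by lia.
have -> : (m - (m - i) = i)%N by lia.
have -> : (m - (m - i).+1 = i.-1)%N by lia.
have L1 := lt i H2.
have L2 : (nth 0 t i.-1 < m)%N by apply: lt; lia.
have -> : (m.-1 - nth 0 t i.-1 < m.-1 - nth 0 t i)%N = (nth 0 t i < nth 0 t i.-1)%N by apply/idP/idP; lia.
congr andb.
have -> : odd (m - i) = ~~ odd i by rewrite oddB ?Hm; [case: (odd i) | lia].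
by case: b; case: (odd i).
Qed.

Lemma W_rc m t p q : size t = m -> odd m -> all (fun v => v < m)%N t ->
  W p q (rc m t) = W q p t.
Proof.
move=> Hs Hm Ht.
have Hs' : size (rc m t) = m by rewrite size_map size_rev.
rewrite !W_pow mulrC; congr (_ ^+ _ * _ ^+ _).
- rewrite /Do /De Hs Hs'.
  have := D_rc false Hs Hm Ht.
  under eq_bigr do rewrite eqbF_neg.
  move=> ->; apply: eq_bigr => i _; by case: (odd i).
- rewrite /Do /De Hs Hs'.
  have := D_rc true Hs Hm Ht.
  under eq_bigr do rewrite eqb_id.
  move=> ->; apply: eq_bigr => i _; by case: (odd i).
Qed.

Lemma A'_sym m p q : odd m -> A' m p q = A' m q p.
Proof.
move=> Hm.
have mem_lt : forall t, t \in Pm m -> all (fun v => v < m)%N t.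
  by move=> t Ht; apply/allP => v; apply: Pm_lt.
have szP : forall t, t \in Pm m -> size t = m.
  by move=> t; rewrite /Pm mem_permutations => /perm_size; rewrite size_iota.
have rcK : {in Pm m, involutive (rc m)}.
  move=> t Ht; rewrite /rc map_rev -map_comp map_rev revK -[RHS]map_id; apply/eq_in_map => v Hv /=.
  have := Pm_lt Ht Hv; lia.
have rcP : {in Pm m, forall t, rc m t \in Pm m}.
  move=> t Ht; rewrite /Pm mem_permutations; apply: uniq_perm.
  - rewrite /rc map_inj_in_uniq ?rev_uniq.
      by move: Ht; rewrite /Pm mem_permutations => /perm_uniq ->; rewrite iota_uniq.
    move=> a b; rewrite !mem_rev => Ha Hb.
    have := Pm_lt Ht Ha; have := Pm_lt Ht Hb; lia.
  - exact: iota_uniq.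
  move=> v; rewrite mem_iota add0n /rc; apply/mapP/idP.
    by case=> w; rewrite mem_rev => Hw ->; have := Pm_lt Ht Hw; lia.
  move=> Hv; exists (m.-1 - v)%N; last by lia.
  rewrite mem_rev; move: Ht; rewrite /Pm mem_permutations => /perm_mem ->.
  rewrite mem_iota; lia.
rewrite /A' -(perm_big _ (perm_inv (permutations_uniq _) rcP rcK)) big_map.
apply: eq_big_seq => t Ht; exact: W_rc (szP t Ht) Hm (mem_lt t Ht).
Qed.


Lemma sum_eo M (f : nat -> R) :
  \sum_(k < 2 * M) f k = \sum_(i < M) (f (2 * i)%N + f (2 * i).+1).
Proof.
elim: M => [|M IH]; first by rewrite !big_ord0.
have -> : (2 * M.+1 = (2 * M).+2)%N by lia.
by rewrite !big_ord_recr /= IH addrA.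
Qed.

End W.

Unset Implicit Arguments.

Theorem lemma2p1 (R : comPzRingType) (p q : R) (n : nat) (hn : (1 <= n)%N) :
  A (2 * n) p q =
    (1 + p) * A (2 * n - 1) p q
    + (p + q) * \sum_(1 <= i < n)
        ('C(2 * n - 1, 2 * i - 1))%:R * A (2 * i - 1) p q * A (2 * n - 2 * i) p q
  /\
  A (2 * n + 1) p q =
    A (2 * n) p q
    + p * \sum_(0 <= i < n)
        ('C(2 * n, 2 * i))%:R * A (2 * i) p q * A (2 * n - 2 * i) q p
    + q * \sum_(1 <= i < n.+1)
        ('C(2 * n, 2 * i - 1))%:R * A (2 * i - 1) p q * A (2 * n - 2 * i + 1) p q.
Proof.
case: n hn => [//|m] _.
under eq_bigr do rewrite !AE.
under [X in _ /\ _ = _ + p * X + _]eq_bigr do rewrite !AE.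
under [X in _ /\ _ = _ + _ + q * X]eq_bigr do rewrite !AE.
rewrite !AE.
split.
- have -> : (2 * m.+1 = (2 * m + 1).+1)%N by lia.
  rewrite rec.
  have -> : ((2 * m + 1).+1 = 2 * m.+1)%N by lia.
  rewrite (sum_eo m.+1 (fun k => 'C(2 * m + 1, k)%:R * (A' k p q * (if (k == 2 * m + 1)%N then 1 else if odd k then q * A' (2 * m + 1 - k) p q else p * A' (2 * m + 1 - k) q p)))).
  rewrite big_split /=.
  pose O i := 'C(2 * m + 1, (2 * i).+1)%:R * A' (2 * i).+1 p q * A' (2 * m - 2 * i) p q.
  have Rs : \sum_(1 <= i < m.+1) 'C(2 * m.+1 - 1, 2 * i - 1)%:R * A' (2 * i - 1) p q * A' (2 * m.+1 - 2 * i) p q = \sum_(0 <= i < m) O i.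
    rewrite big_add1 /=; apply: eq_big_nat => i Hi; rewrite /O.
    have -> : (2 * m.+1 - 1 = 2 * m + 1)%N by lia.
    have -> : (2 * i.+1 - 1 = (2 * i).+1)%N by lia.
    by have -> : (2 * m.+1 - 2 * i.+1 = 2 * m - 2 * i)%N by lia.
  rewrite Rs.
  have -> : (2 * m.+1 - 1 = 2 * m + 1)%N by lia.
  rewrite [X in _ + X = _]big_ord_recr /=.
  rewrite (_ : (2 * m).+1 == (2 * m + 1)%N); last by apply/eqP; lia.
  rewrite (_ : (2 * m).+1 = (2 * m + 1)%N); last by lia.
  rewrite binn mulr1 mul1r.
  rewrite (eq_bigr (fun i : 'I_m => q * O i)); last first.
    move=> i _; rewrite /O /= ifF; last by apply/eqP; have := ltn_ord i; lia.
    rewrite oddM /= (_ : (2 * m + 1 - (2 * i).+1 = 2 * m - 2 * i)%N); last by lia.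
    by ring.
  rewrite -big_distrr /= big_mkord.
  pose E i := 'C(2 * m + 1, 2 * i)%:R * A' (2 * i) p q * A' (2 * m + 1 - 2 * i) p q.
  rewrite (eq_bigr (fun i : 'I_m.+1 => p * E i)); last first.
    move=> i _; rewrite /E /= ifF; last by apply/eqP; lia.
    rewrite oddM /= (A'_sym _ _ (m := (2 * m + 1 - 2 * i)%N)); last first.
      by rewrite oddB ?addn1 /= ?oddM //; have := ltn_ord i; lia.
    by ring.
  rewrite -big_distrr /= -(big_mkord xpredT E) big_nat_recl //.
  have -> : E 0%N = A' (2 * m + 1) p q by rewrite /E muln0 bin0 subn0 A'0 mulr1 mul1r.
  have -> : \sum_(0 <= i < m) E i.+1 = \sum_(0 <= i < m) O i.
    rewrite big_nat_rev /=; apply: eq_big_nat => i Hi; rewrite /E /O.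
    rewrite add0n.
    have -> : (2 * (m - i.+1).+1 = 2 * m - 2 * i)%N by lia.
    have -> : (2 * m + 1 - (2 * m - 2 * i) = (2 * i).+1)%N by lia.
    have -> : (2 * m - 2 * i = 2 * m + 1 - (2 * i).+1)%N by lia.
    rewrite bin_sub; last by lia.
    ring.
  rewrite big_mkord; ring.
- rewrite addn1 rec big_ord_recr /= eqxx binn mul1r mulr1.
  rewrite (sum_eo m.+1 (fun k => 'C(2 * m.+1, k)%:R * (A' k p q * (if (k == 2 * m.+1)%N then 1 else if odd k then q * A' (2 * m.+1 - k) p q else p * A' (2 * m.+1 - k) q p)))).
  rewrite big_split /=.
  have -> : \sum_(i < m.+1) 'C(2 * m.+1, 2 * i)%:R * (A' (2 * i) p q * (if (2 * i == 2 * m.+1)%N then 1 else if odd (2 * i) then q * A' (2 * m.+1 - 2 * i) p q else p * A' (2 * m.+1 - 2 * i) q p)) = p * \sum_(i < m.+1) 'C(2 * m.+1, 2 * i)%:R * A' (2 * i) p q * A' (2 * m.+1 - 2 * i) q p.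
    rewrite big_distrr; apply: eq_bigr => i _ /=.
    rewrite ifF; last by apply/eqP; have := ltn_ord i; lia.
    by rewrite oddM /=; ring.
  have -> : \sum_(i < m.+1) 'C(2 * m.+1, (2 * i).+1)%:R * (A' (2 * i).+1 p q * (if ((2 * i).+1 == 2 * m.+1)%N then 1 else if ~~ odd (2 * i) then q * A' (2 * m.+1 - (2 * i).+1) p q else p * A' (2 * m.+1 - (2 * i).+1) q p)) = q * \sum_(i < m.+1) 'C(2 * m.+1, 2 * i.+1 - 1)%:R * A' (2 * i.+1 - 1) p q * A' (2 * m.+1 - 2 * i.+1 + 1) p q.
    rewrite big_distrr; apply: eq_bigr => i _ /=.
    rewrite ifF; last by apply/eqP; have := ltn_ord i; lia.
    rewrite oddM /=.
    have -> : (2 * i.+1 - 1 = (2 * i).+1)%N by lia.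
    have -> : (2 * m.+1 - 2 * i.+1 + 1 = 2 * m.+1 - (2 * i).+1)%N by have := ltn_ord i; lia.
    by ring.
  rewrite big_add1 /= !big_mkord.
  ring.
Qed.
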